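(* Assume the Continuum Hypothesis. Then there is a productively Baire space $X$ such that \textsc{Bob} has no winning strategy in $\mathsf{BM}_\mathrm{fin}(X)$.
   Context: A Baire space is a space in which countable intersections of dense open sets are dense; a Baire space $X$ is productively Baire if $X\times Y$ is Baire for every Baire space $Y$. The game $\mathsf{BM}_\mathrm{fin}(X)$: \textsc{Alice} plays a non-empty open set $A_0$; \textsc{Bob} plays a finite collection $\mathcal{B}_0$ of non-empty open subsets of $A_0$; in inning $n+1$, for each $B \in \mathcal{B}_n$ \textsc{Alice} plays a non-empty open set $A_B \subseteq B$, letting $\mathcal{A}_{n+1}=\{A_B : B\in\mathcal{B}_n\}$, and \textsc{Bob} plays a finite collection $\mathcal{B}_{n+1}$ of non-empty open subsets of $\bigcup\mathcal{A}_{n+1}$; \textsc{Bob} wins if $\bigcap_{n}\bigcup\mathcal{B}_n\neq\emptyset$, otherwise \textsc{Alice} wins. *)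

(* Defs.v *)
From HB Require Import structures.
From mathcomp Require Import all_boot all_order.
From mathcomp Require Import boolp classical_sets functions cardinality.
From mathcomp Require Import topology.
Set Implicit Arguments. Unset Strict Implicit. Unset Printing Implicit Defensive.
Local Open Scope classical_set_scope.
Local Open Scope card_scope.

Definition CH : Prop :=
  forall A : set (set nat), countable A \/ A #= [set: set nat].

Definition baire_space (X : topologicalType) : Prop :=
  forall F : nat -> set X, (forall n, open (F n) /\ dense (F n)) ->
    dense (\bigcap_n F n).

Definition productively_baire (X : topologicalType) : Prop :=
  baire_space X /\
  forall Y : topologicalType, baire_space Y -> baire_space (X * Y)%type.

(* Alice's move in inning n is a function a_n : set X -> set X, B |-> A_B,
   defined on Bob's previous collection B_{n-1}; the value is set0 outside it.
   For inning 0 we use the convention B_{-1} = {X}, so Alice's first move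
   is A_0 := a_0 setT.  Then A_n = a_n @` B_{n-1}. *)
Definition alice_legal (X : topologicalType) (prevB : set (set X))
    (a : set X -> set X) : Prop :=
  forall B : set X,
    (prevB B -> open (a B) /\ a B !=set0 /\ a B `<=` B) /\
    (~ prevB B -> a B = set0).

Definition bob_legal (X : topologicalType) (prevB : set (set X))
    (a : set X -> set X) (Bs : set (set X)) : Prop :=
  finite_set Bs /\
  forall B : set X, Bs B ->
    open B /\ B !=set0 /\ B `<=` \bigcup_(C in prevB) a C.

(* A strategy for Bob maps the list of Alice's moves so far
   [:: a_0; ...; a_n] to Bob's collection B_n (Bob's own earlier moves
   are determined by the strategy). *)
Definition bob_strategy (X : topologicalType) :=
  seq (set X -> set X) -> set (set X).

Definition bob_move (X : topologicalType) (s : bob_strategy X)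
    (a : nat -> (set X -> set X)) (n : nat) : set (set X) :=
  s (mkseq a n.+1).

Definition prev_bob (X : topologicalType) (s : bob_strategy X)
    (a : nat -> (set X -> set X)) (n : nat) : set (set X) :=
  if n is m.+1 then bob_move s a m else [set setT].

Definition bob_winning (X : topologicalType) (s : bob_strategy X) : Prop :=
  forall a : nat -> (set X -> set X),
    (forall n, (forall k, (k <= n)%N -> alice_legal (prev_bob s a k) (a k)) ->
       bob_legal (prev_bob s a n) (a n) (bob_move s a n)) /\
    ((forall n, alice_legal (prev_bob s a n) (a n)) ->
       \bigcap_n (\bigcup_(B in bob_move s a n) B) !=set0).

Definition bob_has_winning_strategy (X : topologicalType) : Prop :=
  exists s : bob_strategy X, bob_winning s.

(* Main.v *)
Require Import Defs.
From mathcomp Require Import all_boot all_order.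
From mathcomp Require Import boolp classical_sets functions cardinality.
From mathcomp Require Import topology.
From HB Require Import structures.
From mathcomp Require Import zify.
From mathcomp Require wochoice.
Set Implicit Arguments. Unset Strict Implicit. Unset Printing Implicit Defensive.
Local Open Scope classical_set_scope.

Definition code := seq bool.
Definition Nc (s : code) (y : nat -> bool) : Prop := mkseq y (size s) = s.
Definition subc (s t : code) : Prop := take (size s) t = s.

Lemma take_mkseq (f : nat -> bool) k n : k <= n -> take k (mkseq f n) = mkseq f k.
Proof.
move=> kn; apply: (@eq_from_nth _ false).
  by rewrite size_take size_mkseq size_mkseq; case: ltnP => // h; apply/eqP; rewrite eqn_leq h kn.
move=> i; rewrite size_take size_mkseq => hi.
have ik : i < k.
  by move: hi; case: (ltnP k n) => h1 h2 //; apply: leq_trans h2 h1.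
by rewrite nth_take // !nth_mkseq // (leq_trans ik kn).
Qed.

Lemma subc_size s t : subc s t -> size s <= size t.
Proof. by move=> h; rewrite -h size_take; case: ltnP => // /ltnW. Qed.

Lemma subc_N s t y : subc s t -> Nc t y -> Nc s y.
Proof.
move=> st ty; have le := subc_size st; rewrite /Nc.
by rewrite -(take_mkseq y le) ty st.
Qed.

Lemma subc_refl s : subc s s.
Proof. by rewrite /subc take_size. Qed.

Lemma subc_trans s t u : subc s t -> subc t u -> subc s u.
Proof.
move=> st tu; have le := subc_size st.
have := congr1 (take (size s)) tu; rewrite take_takel // st => h; exact: h.
Qed.

Lemma subc_rcons s b : subc s (rcons s b).
Proof. by rewrite /subc -cats1 take_size_cat. Qed.

Lemma Nc_mkseq y n : Nc (mkseq y n) y.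
Proof. by rewrite /Nc size_mkseq. Qed.

Lemma subc_mkseq s y n : Nc s y -> size s <= n -> subc s (mkseq y n).
Proof. by move=> sy le; rewrite /subc take_mkseq. Qed.

Lemma Nc_nth s y i : Nc s y -> i < size s -> y i = nth false s i.
Proof. by move=> sy h; rewrite -[in RHS]sy nth_mkseq. Qed.

Lemma Nc_nil y : Nc [::] y.
Proof. by []. Qed.

Lemma Nc_mono s t x y : Nc t y -> Nc t x -> Nc s x -> size s <= size t -> Nc s y.
Proof.
move=> ty tx sx le; apply: (@subc_N s t) => //.
by rewrite /subc -tx take_mkseq.
Qed.

Definition strat := seq (seq code) -> seq code.
Definition ext (p : nat -> bool) (s : code) : code := rcons s (~~ p (size s)).

Fixpoint chist (tau : strat) (e : nat -> nat -> bool) (n : nat) : seq (seq code) :=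
  match n with
  | 0 => [:: [:: ext (e 0) [::]]]
  | m.+1 => rcons (chist tau e m) (map (ext (e m.+1)) (tau (chist tau e m)))
  end.
Definition cplay tau e n := last [::] (chist tau e n).
Definition Kc (c : nat -> seq code) : set (nat -> bool) :=
  [set y | forall n, exists2 t, t \in c n & Nc t y].

Lemma chist_mkseq tau e n : chist tau e n = mkseq (cplay tau e) n.+1.
Proof.
elim: n => [//|n IH] /=.
by rewrite mkseqS -IH /cplay /= last_rcons.
Qed.

Lemma cplay0 tau e : cplay tau e 0 = [:: ext (e 0) [::]].
Proof. by []. Qed.

Lemma cplayS tau e n :
  cplay tau e n.+1 = map (ext (e n.+1)) (tau (mkseq (cplay tau e) n.+1)).
Proof. by rewrite /cplay /= last_rcons -chist_mkseq. Qed.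

Lemma ext_avoid p s : ~ Nc (ext p s) p.
Proof.
move=> h; have hs : size s < size (ext p s) by rewrite /ext size_rcons.
have := Nc_nth h hs.
rewrite /ext nth_rcons ltnn eqxx; by case: (p (size s)).
Qed.

Lemma subc_ext p s : subc s (ext p s).
Proof. exact: subc_rcons. Qed.

Lemma cplay_avoid tau e n t : t \in cplay tau e n -> ~ Nc t (e n).
Proof.
case: n => [|n].
  by rewrite cplay0 inE => /eqP ->; apply: ext_avoid.
by rewrite cplayS => /mapP [s _ ->]; apply: ext_avoid.
Qed.

Lemma Kc_avoid tau e n : ~ Kc (cplay tau e) (e n).
Proof. by move=> /(_ n) [t /cplay_avoid]. Qed.

Definition dpt (v : code) : nat -> bool := fun i => nth false v i.
Definition dn (n : nat) : nat -> bool := dpt (odflt [::] (unpickle n)).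

Lemma dn_pickle v : dn (pickle v) = dpt v.
Proof. by rewrite /dn pickleK. Qed.

Lemma Nc_of_nth s y : (forall i, i < size s -> y i = nth false s i) -> Nc s y.
Proof.
move=> h; apply: (@eq_from_nth _ false); rewrite size_mkseq // => i hi.
by rewrite nth_mkseq // h.
Qed.

Lemma Nc_dpt v : Nc v (dpt v).
Proof. by apply: Nc_of_nth. Qed.

Lemma avoid_exists c : (forall v, ~ Kc c (dpt v)) ->
  forall v, exists v', subc v v' /\ forall y, Nc v' y -> ~ Kc c y.
Proof.
move=> hc v; have := hc v.
move=> /existsNP [n hn0].
have hn : forall t, t \in c n -> ~ Nc t (dpt v) by move=> t0 h0 h1; apply: hn0; exists t0.
pose L := \max_(t <- c n) size t.
pose M := maxn L (size v).
exists (mkseq (dpt v) M); split.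
  by apply: subc_mkseq; [apply: Nc_dpt | rewrite leq_maxr].
move=> y hy /(_ n) [t tin ty].
have lt : size t <= M.
  apply: leq_trans (leq_maxl _ _).
  exact: (@leq_bigmax_seq _ (c n) xpredT size t tin).
apply: (hn t tin).
apply: (@Nc_mono t (mkseq (dpt v) M) y) => //; first exact: Nc_mkseq.
by rewrite size_mkseq.
Qed.

Definition task := (code * (nat -> set code))%type.
Definition enter (O : set code) (v : code) : code :=
  xget v [set v' | subc v v' /\ O v'].
Definition avoidc (c : nat -> seq code) (v : code) : code :=
  xget v [set v' | subc v v' /\ forall y, Nc v' y -> ~ Kc c y].

Lemma subc_xget v (Q : code -> Prop) : subc v (xget v [set v' | subc v v' /\ Q v']).
Proof. by case: xgetP => [x _ [] // | _]; apply: subc_refl. Qed.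

Fixpoint wnode (T : task) (Ks : nat -> nat -> seq code) n : code :=
  match n with
  | 0 => T.1
  | m.+1 => rcons (avoidc (Ks m) (enter (T.2 m) (wnode T Ks m))) false
  end.
Definition xbuild T Ks : nat -> bool := fun k => nth false (wnode T Ks k.+1) k.

Lemma wnode_step T Ks n : subc (wnode T Ks n) (wnode T Ks n.+1).
Proof.
rewrite /=; apply: subc_trans (subc_rcons _ _).
apply: subc_trans (subc_xget _ _); exact: subc_xget.
Qed.

Lemma wnode_size T Ks n : n <= size (wnode T Ks n).
Proof.
elim: n => // n IH /=; rewrite size_rcons ltnS.
apply: leq_trans IH _; apply: subc_size.
apply: subc_trans (subc_xget _ _); exact: subc_xget.
Qed.

Lemma wnode_mono T Ks m n : m <= n -> subc (wnode T Ks m) (wnode T Ks n).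
Proof.
elim: n => [|n IH]; first by rewrite leqn0 => /eqP ->; apply: subc_refl.
rewrite leq_eqVlt => /orP [/eqP -> | h]; first exact: subc_refl.
exact: subc_trans (IH h) (wnode_step _ _ _).
Qed.

Lemma subc_nth s t i : subc s t -> i < size s -> nth false t i = nth false s i.
Proof. by move=> st hi; rewrite -[in RHS]st nth_take. Qed.

Lemma xbuild_N T Ks n : Nc (wnode T Ks n) (xbuild T Ks).
Proof.
apply: Nc_of_nth => i hi; rewrite /xbuild.
pose M := maxn n i.+1.
rewrite -(@subc_nth _ (wnode T Ks M)); last by apply: leq_trans (wnode_size _ _ _).
  rewrite -(@subc_nth _ (wnode T Ks M)) //.
  by apply: wnode_mono; rewrite leq_maxl.
by apply: wnode_mono; rewrite leq_maxr.
Qed.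

Lemma xbuild_u T Ks : Nc T.1 (xbuild T Ks).
Proof. exact: (xbuild_N T Ks 0). Qed.

Lemma xbuild_task T Ks : (forall n w, exists w', subc w w' /\ T.2 n w') ->
  forall n, exists s, T.2 n s /\ Nc s (xbuild T Ks).
Proof.
move=> dT n; exists (enter (T.2 n) (wnode T Ks n)); split.
  have [w' [h1 h2]] := dT n (wnode T Ks n).
  by have [] := xgetI (wnode T Ks n) (conj h1 h2 : [set v' | _ /\ _] w').
apply: (subc_N _ (xbuild_N T Ks n.+1)) => /=.
apply: subc_trans (subc_rcons _ _); exact: subc_xget.
Qed.

Lemma xbuild_avoid T Ks :
  (forall k v, exists v', subc v v' /\ forall y, Nc v' y -> ~ Kc (Ks k) y) ->
  forall k, ~ Kc (Ks k) (xbuild T Ks).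
Proof.
move=> hK k; set v := enter (T.2 k) (wnode T Ks k).
have [v' [h1 h2]] := hK k v.
have := xgetI v (conj h1 h2 : [set v' | subc v v' /\ forall y, Nc v' y -> ~ Kc (Ks k) y] v').
move=> [_ ]; apply; apply: (subc_N _ (xbuild_N T Ks k.+1)) => /=.
exact: subc_rcons.
Qed.

Lemma pickle_inj (T : countType) : injective (@pickle T).
Proof. exact: pcan_inj (@pickleK T). Qed.

Definition decT (A : set nat) : strat :=
  fun H => xget [::] [set l | A (pickle (H, l))].
Definition encT (tau : strat) : set nat := [set k | exists H, k = pickle (H, tau H)].

Lemma decT_enc tau : decT (encT tau) = tau.
Proof.
apply: funext => H; apply: xget_unique; first by exists H.
by move=> l [H' /pickle_inj [-> ->]].
Qed.

Definition decB (A : set nat) : task :=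
  (xget [::] [set u | A (pickle (0%N, u))], fun n s => A (pickle (n.+1, s))).
Definition encB (T : task) : set nat :=
  [set k | k = pickle (0%N, T.1) \/ exists n s, T.2 n s /\ k = pickle (n.+1, s)].

Lemma decB_enc T : decB (encB T) = T.
Proof.
case: T => u O; rewrite /decB /=; congr pair.
  apply: xget_unique; first by left.
  by move=> v [/pickle_inj [->] // | [n [s [_ /pickle_inj []]]]].
apply: funext => n; apply: funext => s; apply: propext; split.
  by move=> [/pickle_inj [] | [m [t [h /pickle_inj [-> ->]]]]].
by move=> h; right; exists n, s.
Qed.

Definition decT2 (A : set nat) : strat := decT [set n | A n.*2].
Definition decB2 (A : set nat) : task := decB [set n | A n.*2.+1].

Lemma decT2_surj tau : decT2 [set k | encT tau k./2] = tau.
Proof.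
rewrite /decT2 -[RHS]decT_enc; congr decT.
by apply: funext => n /=; rewrite doubleK.
Qed.

Lemma decB2_surj T : decB2 [set k | encB T k./2] = T.
Proof.
rewrite /decB2 -[RHS]decB_enc; congr decB.
by apply: funext => n /=; rewrite uphalf_double.
Qed.

Definition data := ((nat -> seq code) * (nat -> bool))%type.
Definition dflt : data := (fun _ => [::], fun _ => false).

Definition H1 (P : set (nat -> bool)) := forall (u : code) (O : nat -> set code),
  (forall n w, exists w', subc w w' /\ O n w') ->
  exists y, P y /\ Nc u y /\ forall n, exists s, O n s /\ Nc s y.
Definition H2 (P : set (nat -> bool)) :=
  forall tau : strat, exists e, forall y, P y -> ~ Kc (cplay tau e) y.

Section Construction.
Variable lt : set nat -> set nat -> Prop.
Variable ltwf : well_founded lt.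
Variable G : set (set nat).
Variable tri : forall a b, G a -> G b -> lt a b \/ a = b \/ lt b a.
Variable g : set nat -> nat -> set nat.
Variable genum : forall a b, lt b a -> exists n, g a n = b.
Variable fs : set nat -> set nat.
Variable fsurj : forall A, exists a, G a /\ fs a = A.

Definition tauOf a := decT2 (fs a).
Definition taskOf a := decB2 (fs a).
Definition eOf a (prev : set nat -> data) n : nat -> bool :=
  if odd n then (if `[< lt (g a n./2) a >] then (prev (g a n./2)).2 else dn 0)
  else dn n./2.
Definition cOf a prev := cplay (tauOf a) (eOf a prev).
Definition KsOf a prev n : nat -> seq code :=
  if odd n then (if `[< lt (g a n./2) a >] then (prev (g a n./2)).1 else cOf a prev)
  else cOf a prev.
Definition step a prev : data := (cOf a prev, xbuild (taskOf a) (KsOf a prev)).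
Definition wrap a (rec : forall b, lt b a -> data) : set nat -> data :=
  fun b => match pselect (lt b a) with left h => rec b h | right _ => dflt end.
Definition Fdat := Fix ltwf (fun _ => data) (fun a rec => step a (@wrap a rec)).
Definition W a := @wrap a (fun b (_ : lt b a) => Fdat b).

Lemma Fdat_eq a : Fdat a = step a (W a).
Proof.
rewrite /Fdat Fix_eq //.
move=> x f f' hf; congr step; apply: funext => b; rewrite /wrap.
by case: pselect.
Qed.

Lemma WE a b : lt b a -> W a b = Fdat b.
Proof. by rewrite /W /wrap; case: pselect. Qed.

Lemma eOf_even a prev n : eOf a prev n.*2 = dn n.
Proof. by rewrite /eOf odd_double doubleK. Qed.

Lemma eOf_odd a b n : lt b a -> g a n = b -> eOf a (W a) n.*2.+1 = (Fdat b).2.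
Proof.
move=> hb hg; rewrite /eOf /= odd_double /=.
rewrite ?uphalf_double.
by rewrite hg asboolT // WE.
Qed.

Lemma KsOf_odd a b n : lt b a -> g a n = b -> KsOf a (W a) n.*2.+1 = (Fdat b).1.
Proof.
move=> hb hg; rewrite /KsOf /= odd_double /=.
rewrite ?uphalf_double.
by rewrite hg asboolT // WE.
Qed.

Lemma KsOf_0 a : KsOf a (W a) 0 = (Fdat a).1.
Proof. by rewrite Fdat_eq. Qed.

Lemma Fdat1 a : (Fdat a).1 = cplay (tauOf a) (eOf a (W a)).
Proof. by rewrite Fdat_eq. Qed.

Lemma Fdat2 a : (Fdat a).2 = xbuild (taskOf a) (KsOf a (W a)).
Proof. by rewrite Fdat_eq. Qed.

Lemma Fdat_dense a v : ~ Kc (Fdat a).1 (dpt v).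
Proof. by rewrite Fdat1 -dn_pickle -(eOf_even a (W a)); apply: Kc_avoid. Qed.

Lemma KsOf_is a k : exists b, KsOf a (W a) k = (Fdat b).1.
Proof.
rewrite /KsOf; case: ifP => _; last by exists a; rewrite Fdat1.
case: asboolP => h; last by exists a; rewrite Fdat1.
by exists (g a k./2); rewrite WE.
Qed.

Definition Pset : set (nat -> bool) := [set y | exists a, G a /\ y = (Fdat a).2].

Lemma Pset_H1 : H1 Pset.
Proof.
move=> u O dO.
have [a [Ga fa]] := fsurj [set k | encB (u, O) k./2].
have ht : taskOf a = (u, O) by rewrite /taskOf fa decB2_surj.
exists (Fdat a).2; split; first by exists a.
rewrite Fdat2 ht; split; first exact: (xbuild_u (u, O)).
exact: (xbuild_task (T := (u, O))).
Qed.

Lemma Pset_H2 : H2 Pset.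
Proof.
move=> tau.
have [a [Ga fa]] := fsurj [set k | encT tau k./2].
have ht : tauOf a = tau by rewrite /tauOf fa decT2_surj.
exists (eOf a (W a)) => y [b [Gb ->]].
rewrite -ht -Fdat1.
have avoidb : forall k, ~ Kc (KsOf b (W b) k) (Fdat b).2.
  rewrite Fdat2; apply: xbuild_avoid => k v.
  have [c ->] := KsOf_is b k.
  by apply: avoid_exists => w; apply: Fdat_dense.
case: (tri Ga Gb) => [hab | [hab | hba]].
- have [n hn] := genum hab.
  by have := avoidb n.*2.+1; rewrite (KsOf_odd hab hn).
- subst b; have := avoidb 0; rewrite KsOf_0 //.
- have [n hn] := genum hba.
  rewrite -(eOf_odd hba hn) Fdat1; exact: Kc_avoid.
Qed.

End Construction.

Local Open Scope card_scope.

Lemma cantor_setnat : ~ countable [set: set nat].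
Proof.
move=> /countable_injP [f finj].
pose D := [set n | exists A, f A = n /\ ~ A n].
have injf : forall A B, f A = f B -> A = B.
  by move=> A B h; apply: finj => //; rewrite inE.
have [hD | hD] := EM (D (f D)).
  have [A [/injf eA nA]] := hD; by rewrite eA in nA.
by apply: (hD); exists D; split.
Qed.

Section WO.
Variable R : rel (set nat).
Variable hR : wochoice.well_order R.

Let minP (A : {pred set nat}) : (exists x, x \in A) ->
  exists z, z \in A /\ forall x, x \in A -> R z x.
Proof.
move=> /hR [z [[zA zlb] _]]; exists z; split => // x xA; exact: zlb.
Qed.

Lemma R_total a b : R a b \/ R b a.
Proof.
have [|z [zA zmin]] := minP (A := [pred x | (x == a) || (x == b)]).
  by exists a; rewrite inE eqxx.
move: zA; rewrite inE => /orP [/eqP ez | /eqP ez]; subst z.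
  by left; apply: zmin; rewrite inE eqxx orbT.
by right; apply: zmin; rewrite inE eqxx.
Qed.

Lemma R_refl a : R a a.
Proof. by case: (R_total a a). Qed.

Lemma R_antisym a b : R a b -> R b a -> a = b.
Proof.
move=> ab ba.
have ne : exists x, x \in [pred x | (x == a) || (x == b)] by exists a; rewrite inE eqxx.
have [z [_ zuniq]] := hR ne.
have ha : wochoice.minimum_of R [pred x | (x == a) || (x == b)] a.
  split; first by rewrite inE eqxx.
  by move=> x; rewrite inE => /orP [/eqP -> | /eqP ->] //; apply: R_refl.
have hb : wochoice.minimum_of R [pred x | (x == a) || (x == b)] b.
  split; first by rewrite inE eqxx orbT.
  by move=> x; rewrite inE => /orP [/eqP -> | /eqP ->] //; apply: R_refl.
by rewrite -(zuniq _ ha) -(zuniq _ hb).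
Qed.

Lemma R_trans a b c : R a b -> R b c -> R a c.
Proof.
move=> ab bc.
have [|z [zA zmin]] := minP (A := [pred x | [|| x == a, x == b | x == c]]).
  by exists a; rewrite inE eqxx.
have inA x : (x == a) || (x == b) || (x == c) -> x \in [pred x | [|| x == a, x == b | x == c]].
  by rewrite inE -orbA.
move: zA; rewrite inE => /or3P [/eqP ez | /eqP ez | /eqP ez]; subst z.
- by apply: zmin; rewrite inE !eqxx !orbT.
- have ba : R b a by apply: zmin; rewrite inE eqxx.
  by rewrite (R_antisym ab ba).
- have cb : R c b by apply: zmin; rewrite inE eqxx orbT.
  by rewrite -(R_antisym bc cb).
Qed.

Definition lt0 a b := R a b /\ a <> b.

Lemma lt0_wf : well_founded lt0.
Proof.
move=> a; apply: contrapT => na.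
have [|z [zA zmin]] := minP (A := [pred x | `[< ~ Acc lt0 x >]]).
  by exists a; rewrite inE /=.
move: zA; rewrite inE /=; apply; constructor => y [yz ynz].
apply: contrapT => ny.
have zy : R z y by apply: zmin; rewrite inE /=.
exact: ynz (R_antisym yz zy).
Qed.

Lemma lt0_trans a b c : lt0 a b -> lt0 b c -> lt0 a c.
Proof.
move=> [ab nab] [bc nbc]; split; first exact: R_trans ab bc.
move=> ac; subst c; exact: nab (R_antisym ab bc).
Qed.

Definition Gs : set (set nat) := [set a | countable [set b | lt0 b a]].

Lemma Gs_card (ch : CH) : Gs #= [set: set nat].
Proof.
case: (ch Gs) => // cG; exfalso.
have [allG | ] := EM (forall a, Gs a).
  by apply: cantor_setnat; apply: sub_countable cG; apply: subset_card_le => a _; apply: allG.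
move=> /existsNP [a0 na0].
have [|z [zA zmin]] := minP (A := [pred x | `[< ~ Gs x >]]).
  by exists a0; rewrite inE /=.
move: zA; rewrite inE /=; apply.
apply: sub_countable cG; apply: subset_card_le => b [bz nbz].
apply: contrapT => nb.
have zb : R z b by apply: zmin; rewrite inE /=.
exact: nbz (R_antisym bz zb).
Qed.

End WO.

Lemma ord_setup : CH -> exists (lt : set nat -> set nat -> Prop) (wf : well_founded lt)
  (G : set (set nat)) (g : set nat -> nat -> set nat) (fs : set nat -> set nat),
  [/\ (forall a b, G a -> G b -> lt a b \/ a = b \/ lt b a),
      (forall a b, lt b a -> exists n, g a n = b) &
      (forall A, exists a, G a /\ fs a = A)].
Proof.
move=> ch.
have [R hR] := wochoice.well_ordering_principle (set nat).
pose lt b a := lt0 R b a /\ Gs R a.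
have wf : well_founded lt.
  move=> a; have := lt0_wf hR a; elim => x _ IH; constructor => y [hy _].
  exact: IH.
have [g hg] : {g : set nat -> nat -> set nat & forall a b, lt b a -> exists n, g a n = b}.
  apply: (@choice _ _ (fun a (ga : nat -> set nat) => forall b, lt b a -> exists n, ga n = b)) => a.
  have [Ga | nGa] := EM (Gs R a); last by exists (fun _ => a) => b [].
  have /countable_injP [f finj] := Ga.
  exists (fun n => xget a [set b | lt0 R b a /\ f b = n]) => b [hb _].
  exists (f b).
  have [h1 h2] : [set b' | lt0 R b' a /\ f b' = f b] (xget a [set b' | lt0 R b' a /\ f b' = f b]).
    by apply: xgetI; split; first exact: hb.
  by apply: finj => //; rewrite inE.
have /card_set_bijP [fs [_ _ fsurj]] := Gs_card hR ch.
exists lt, wf, (Gs R), g, fs; split => //.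
- move=> a b Ga Gb.
  have [->| nab] := EM (a = b); first by right; left.
  case: (R_total hR a b) => h.
    by left; split => //; split.
  by right; right; split => //; split => // /esym.
- move=> A; have [a Ga <-] := fsurj A I; by exists a.
Qed.

Lemma construct : CH -> exists P : set (nat -> bool), H1 P /\ H2 P.
Proof.
move=> /ord_setup [lt [wf [G [g [fs [tri genum fsurj]]]]]].
exists (Pset wf G g fs); split.
  exact: Pset_H1.
exact: Pset_H2.
Qed.

Record Xt (P : set (nat -> bool)) := MkX { xval : nat -> bool ; xP : P xval }.
HB.instance Definition _ (P : set (nat -> bool)) := gen_eqMixin (Xt P).
HB.instance Definition _ (P : set (nat -> bool)) := gen_choiceMixin (Xt P).

Definition opX P (U : set (Xt P)) : Prop :=
  forall x, U x -> exists s, Nc s (xval x) /\ forall y, Nc s (xval y) -> U y.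

Lemma opX_T P : opX (@setT (Xt P)).
Proof. by move=> x _; exists [::]; split. Qed.

Lemma opX_I P : setI_closed (@opX P).
Proof.
move=> A B oA oB x [Ax Bx].
have [s1 [h1 k1]] := oA x Ax; have [s2 [h2 k2]] := oB x Bx.
exists (mkseq (xval x) (maxn (size s1) (size s2))); split; first exact: Nc_mkseq.
move=> y hy; split.
  apply: k1; apply: (Nc_mono (x := xval x) hy (Nc_mkseq _ _) h1).
  by rewrite size_mkseq leq_maxl.
apply: k2; apply: (Nc_mono (x := xval x) hy (Nc_mkseq _ _) h2).
by rewrite size_mkseq leq_maxr.
Qed.

Lemma opX_bigU P (I : Type) (f : I -> set (Xt P)) :
  (forall i, opX (f i)) -> opX (\bigcup_i f i).
Proof.
move=> hf x [i _ fx]; have [s [h k]] := hf i x fx.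
by exists s; split => // y /k; exists i.
Qed.

HB.instance Definition _ (P : set (nat -> bool)) :=
  isOpenTopological.Build (Xt P) (@opX_T P) (@opX_I P) (@opX_bigU P).

Lemma openXE P (U : set (Xt P)) : open U = opX U.
Proof. by []. Qed.

Lemma box (X Y : topologicalType) (W : set (X * Y)) x y : open W -> W (x, y) ->
  exists U V, [/\ open U, open V, U x, V y & U `*` V `<=` W].
Proof.
rewrite openE => oW Wxy; have := oW _ Wxy.
move=> [[Q R] /= [nQ nR] sQR].
move: nQ; rewrite nbhsE => -[U [oU Ux] sUQ].
move: nR; rewrite nbhsE => -[V [oV Vy] sVR].
exists U, V; split => // -[a b] [/= Ua Vb]; apply: sQR; split; [exact: sUQ | exact: sVR].
Qed.

Lemma openX (X Y : topologicalType) (U : set X) (V : set Y) :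
  open U -> open V -> open (U `*` V).
Proof.
move=> oU oV; rewrite openE => -[a b] [/= Ua Vb].
by exists (U, V) => //=; split; apply: open_nbhs_nbhs.
Qed.

Section SpaceProps.
Variable P : set (nat -> bool).
Variable hP1 : H1 P.

Lemma Pdense s : exists y, P y /\ Nc s y.
Proof.
have [|y [Py [sy _]]] := @hP1 s (fun (_ : nat) (_ : code) => True).
  by move=> n w; exists w; split => //; apply: subc_refl.
by exists y.
Qed.

Definition NX s : set (Xt P) := [set x | Nc s (xval x)].

Lemma NX_open s : open (NX s).
Proof. by rewrite openXE => x h; exists s. Qed.

Lemma NX_n0 s : NX s !=set0.
Proof. by have [y [Py sy]] := Pdense s; exists (MkX Py). Qed.

Lemma open_NX (U : set (Xt P)) x : open U -> U x -> exists s, NX s x /\ NX s `<=` U.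
Proof. by rewrite openXE => /(_ x) h /h [s [sx k]]; exists s; split. Qed.

Lemma X_baire : baire_space (Xt P).
Proof.
move=> F hF O [x Ox] oO.
have [s [sx sO]] := open_NX oO Ox.
pose Ot n := [set w | NX w `<=` F n].
have dens : forall n w, exists w', subc w w' /\ Ot n w'.
  move=> n w.
  have [y [yw yF]] := (hF n).2 (NX w) (@NX_n0 w) (@NX_open w).
  have [s' [s'y s'F]] := open_NX (hF n).1 yF.
  exists (mkseq (xval y) (maxn (size w) (size s'))); split.
    by apply: subc_mkseq => //; rewrite leq_maxl.
  move=> z zw; apply: s'F.
  apply: (Nc_mono (x := xval y) zw (Nc_mkseq _ _) s'y).
  by rewrite size_mkseq leq_maxr.
have [y [Py [uy hy]]] := @hP1 s Ot dens.
exists (MkX Py); split; first exact: sO.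
move=> n _; have [s0 [Os0 s0y]] := hy n; exact: Os0.
Qed.

Lemma X_prod_baire (Y : topologicalType) : baire_space Y -> baire_space (Xt P * Y)%type.
Proof.
move=> bY W hW O [[x0 y0] Oxy] oO.
have [U0 [V0 [oU0 oV0 U0x V0y sUV]]] := box oO Oxy.
have [s0 [s0x s0U]] := open_NX oU0 U0x.
pose E n s : set Y := [set y | exists x, NX s x /\ W n (x, y)].
have oE : forall n s, open (E n s).
  move=> n s; rewrite openE => y [x [sx Wxy]].
  have [U [V [oU oV Ux Vy sW]]] := box (hW n).1 Wxy.
  rewrite /interior nbhsE; exists V => //.
  by move=> y' Vy'; exists x; split => //; apply: sW.
have dE : forall n s, dense (E n s).
  move=> n s V' [y' V'y'] oV'.
  have [x xs] := @NX_n0 s.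
  have [[a b] [[/= sa Vb] Wab]] := (hW n).2 (NX s `*` V') (ex_intro _ (x, y') (conj xs V'y'))
    (openX (@NX_open s) oV').
  by exists b; split => //; exists a.
pose G (m : nat) : set Y :=
  if (unpickle m : option (nat * seq bool)) is Some ns then E ns.1 ns.2 else setT.
have hG : forall m, open (G m) /\ dense (G m).
  move=> m; rewrite /G; case: (unpickle m) => [[n s]|] /=; first by split.
  by split; [exact: openT | move=> O' O'n _; rewrite setIT].
have [y [V0y' Gy]] := bY G hG V0 (ex_intro _ y0 V0y) oV0.
have hE : forall n s, E n s y.
  by move=> n s; have := Gy (pickle (n, s)) I; rewrite /G pickleK.
pose F n : set (Xt P) := [set x | W n (x, y)].
have hF : forall n, open (F n) /\ dense (F n).
  move=> n; split.
    rewrite openXE => x Wxy.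
    have [U [V [oU oV Ux Vy sW]]] := box (hW n).1 Wxy.
    have [s [sx sU]] := open_NX oU Ux.
    by exists s; split => // z zs; apply: sW; split; [apply: sU|].
  move=> O' [x' O'x'] oO'.
  have [t [tx tO]] := open_NX oO' O'x'.
  have [x [xt Wxy]] := hE n t.
  by exists x; split; [apply: tO|].
have [x [s0x' Fx]] := @X_baire F hF (NX s0) (@NX_n0 s0) (@NX_open s0).
exists (x, y); split; first by apply: sUV; split; [apply: s0U|exact: V0y'].
by move=> n _; apply: Fx.
Qed.

Lemma X_prodb : productively_baire (Xt P).
Proof. split; [exact: X_baire | move=> Y; exact: X_prod_baire]. Qed.

End SpaceProps.

Section Game.
Variable P : set (nat -> bool).
Variable hP1 : H1 P.
Variable hP2 : H2 P.
Local Notation X := (Xt P).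

Definition code_of (B : set X) : code := xget [::] [set s | @NX P s `<=` B /\ @NX P s !=set0].
Definition listof (F : set (set X)) : seq (set X) := xget [::] [set l | forall B, F B -> B \in l].
Definition mkA (cl : seq code) (F : set (set X)) : set X -> set X :=
  fun B => if `[< F B >] then @NX P (nth [::] cl (index B (listof F))) else set0.
Definition mkA0 (cl : seq code) : set X -> set X :=
  fun B => if `[< B = setT >] then @NX P (head [::] cl) else set0.

Lemma code_ofP (B : set X) : open B -> B !=set0 -> @NX P (code_of B) `<=` B.
Proof.
move=> oB [x Bx]; have [s [sx sB]] := open_NX oB Bx.
by have [] := xgetI [::] (conj sB (ex_intro _ x sx) : [set s | @NX P s `<=` B /\ @NX P s !=set0] s).
Qed.

Lemma listofP (F : set (set X)) : finite_set F -> forall B, F B -> B \in listof F.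
Proof.
move=> /finite_seqP [s ->].
have := xgetI [::] ((fun B (h : [set` s] B) => h) : [set l | forall B, [set` s] B -> B \in l] s).
by move=> h B /h.
Qed.

Variable sigma : bob_strategy X.

Fixpoint Rhist (c : nat -> seq code) n : seq (set X -> set X) :=
  match n with
  | 0 => [:: mkA0 (c 0)]
  | m.+1 => rcons (Rhist c m) (mkA (c m.+1) (sigma (Rhist c m)))
  end.
Definition tauS : strat :=
  fun H => map code_of (listof (sigma (Rhist (fun i => nth [::] H i) (size H).-1))).
Definition realA c n := last (fun _ => set0) (Rhist c n).

Lemma Rhist_mkseq c n : Rhist c n = mkseq (realA c) n.+1.
Proof.
elim: n => [//|n IH] /=.
by rewrite mkseqS -IH /realA /= last_rcons.
Qed.

Lemma Rhist_dep c c' n : (forall i, i <= n -> c i = c' i) -> Rhist c n = Rhist c' n.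
Proof.
elim: n => [h|n IH h] /=; first by rewrite h.
rewrite IH ?h // => i hi; apply: h; exact: ltnW.
Qed.

Lemma realAS c n : realA c n.+1 = mkA (c n.+1) (bob_move sigma (realA c) n).
Proof. by rewrite /realA /= last_rcons /bob_move -Rhist_mkseq. Qed.

Lemma realA0 c : realA c 0 = mkA0 (c 0).
Proof. by []. Qed.

End Game.

Lemma no_win P : H1 P -> H2 P -> ~ bob_has_winning_strategy (Xt P).
Proof.
move=> hP1 hP2 [sigma win].
have [e he] := hP2 (tauS sigma).
pose c := cplay (tauS sigma) e.
pose a := realA sigma c.
have c0 : c 0 = [:: ext (e 0) [::]] by [].
have cS : forall n, c n.+1 = map (ext (e n.+1)) (map (@code_of P) (listof (bob_move sigma a n))).
  move=> n; rewrite /c cplayS /tauS size_mkseq /=.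
  rewrite (@Rhist_dep _ _ _ c) ?Rhist_mkseq //.
  by move=> i hi; rewrite nth_mkseq.
have nthc : forall n B, bob_legal (prev_bob sigma a n) (a n) (bob_move sigma a n) ->
    bob_move sigma a n B ->
    index B (listof (bob_move sigma a n)) < size (c n.+1) /\
    nth [::] (c n.+1) (index B (listof (bob_move sigma a n))) =
      ext (e n.+1) (code_of B).
  move=> n B [fin _] FB.
  have Bin := listofP fin FB.
  have hi : index B (listof (bob_move sigma a n)) < size (listof (bob_move sigma a n)).
    by rewrite index_mem.
  rewrite cS !size_map; split => //.
  by rewrite (nth_map [::]) ?size_map // (nth_map set0) // nth_index.
have L0 : alice_legal (prev_bob sigma a 0) (a 0).
  move=> B; rewrite /prev_bob /a realA0 /mkA0; split.
    move=> -> /=; rewrite asboolT //; split; first exact: NX_open.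
    by split; [exact: NX_n0 | ].
  by move=> nB; rewrite asboolF.
have LS : forall n, bob_legal (prev_bob sigma a n) (a n) (bob_move sigma a n) ->
    alice_legal (prev_bob sigma a n.+1) (a n.+1).
  move=> n hb B; rewrite /prev_bob /a realAS /mkA -/a; split.
    move=> FB; rewrite asboolT //.
    have [hi ->] := nthc n B hb FB.
    have [oB [nB _]] := hb.2 B FB.
    split; first exact: NX_open.
    split; first exact: NX_n0.
    move=> x /(subc_N (subc_ext _ _)); exact: code_ofP.
  by move=> nB; rewrite asboolF.
have legal : forall n, alice_legal (prev_bob sigma a n) (a n).
  suff : forall n k, k <= n -> alice_legal (prev_bob sigma a k) (a k).
    by move=> h n; apply: (h n).
  elim => [k|n IH k]; first by rewrite leqn0 => /eqP ->.
  rewrite leq_eqVlt => /orP [/eqP -> | hk]; last by apply: IH.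
  by apply: LS; apply: (win a).1.
have bl : forall n, bob_legal (prev_bob sigma a n) (a n) (bob_move sigma a n).
  by move=> n; apply: (win a).1 => k _; apply: legal.
have [z hz] := (win a).2 legal.
apply: (he (xval z) (xP z)) => n.
have [B Bn Bz] := hz n I.
have [oB [nB BU]] := (bl n).2 B Bn.
have [C Cp Cz] := BU z Bz.
move: Cp Cz; case: n {Bn Bz BU oB nB} => [|m] Cp Cz.
  exists (ext (e 0) [::]); first by rewrite /c cplay0 inE.
  move: Cz; rewrite /a realA0 /mkA0 asboolT //.
have [hi _] := nthc m C (bl m) Cp.
exists (nth [::] (c m.+1) (index C (listof (bob_move sigma a m)))); first exact: mem_nth.
by move: Cz; rewrite /a realAS /mkA asboolT.
Qed.


Theorem corollary4p12 :
  CH -> exists X : topologicalType,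
    productively_baire X /\ ~ bob_has_winning_strategy X.
Proof.
move=> ch; have [P [h1 h2]] := construct ch.
exists (Xt P); split; [exact: X_prodb h1 | exact: no_win h1 h2].
Qed.
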